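(* Let $X$ be a real Banach lattice and $C\subseteq X$. If $\operatorname{so}(\overline{|C|})$ is norm closed, then $\overline{\operatorname{so}(C)}=\operatorname{so}(\overline{|C|})$, where $|C|=\{|x|:x\in C\}$ and bars denote norm closures.
   Context: $\operatorname{so}(S)$ is the set of all $z\in X$ for which there exists $x\in S$ with $|z|\le|x|$ (the smallest solid set containing $S$). *)

(* Defs.v *)
From Stdlib Require Import Reals.
Open Scope R_scope.

Record BanachLattice := {
  carrier :> Type;
  bl_zero : carrier;
  bl_add : carrier -> carrier -> carrier;
  bl_opp : carrier -> carrier;
  bl_scal : R -> carrier -> carrier;
  bl_le : carrier -> carrier -> Prop;
  bl_join : carrier -> carrier -> carrier;
  bl_meet : carrier -> carrier -> carrier;
  bl_norm : carrier -> R;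
  bl_addA : forall x y z, bl_add x (bl_add y z) = bl_add (bl_add x y) z;
  bl_addC : forall x y, bl_add x y = bl_add y x;
  bl_add0 : forall x, bl_add x bl_zero = x;
  bl_addN : forall x, bl_add x (bl_opp x) = bl_zero;
  bl_scalA : forall a b x, bl_scal a (bl_scal b x) = bl_scal (a * b) x;
  bl_scal1 : forall x, bl_scal 1 x = x;
  bl_scalDr : forall a x y, bl_scal a (bl_add x y) = bl_add (bl_scal a x) (bl_scal a y);
  bl_scalDl : forall a b x, bl_scal (a + b) x = bl_add (bl_scal a x) (bl_scal b x);
  bl_le_refl : forall x, bl_le x x;
  bl_le_trans : forall x y z, bl_le x y -> bl_le y z -> bl_le x z;
  bl_le_antisym : forall x y, bl_le x y -> bl_le y x -> x = y;
  bl_join_ub_l : forall x y, bl_le x (bl_join x y);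
  bl_join_ub_r : forall x y, bl_le y (bl_join x y);
  bl_join_lub : forall x y z, bl_le x z -> bl_le y z -> bl_le (bl_join x y) z;
  bl_meet_lb_l : forall x y, bl_le (bl_meet x y) x;
  bl_meet_lb_r : forall x y, bl_le (bl_meet x y) y;
  bl_meet_glb : forall x y z, bl_le z x -> bl_le z y -> bl_le z (bl_meet x y);
  bl_le_add : forall x y z, bl_le x y -> bl_le (bl_add x z) (bl_add y z);
  bl_le_scal : forall a x y, 0 <= a -> bl_le x y -> bl_le (bl_scal a x) (bl_scal a y);
  bl_norm_ge0 : forall x, 0 <= bl_norm x;
  bl_norm_eq0 : forall x, bl_norm x = 0 -> x = bl_zero;
  bl_norm_triangle : forall x y, bl_norm (bl_add x y) <= bl_norm x + bl_norm y;
  bl_norm_scal : forall a x, bl_norm (bl_scal a x) = Rabs a * bl_norm x;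
  bl_norm_lattice : forall x y,
    bl_le (bl_join x (bl_opp x)) (bl_join y (bl_opp y)) -> bl_norm x <= bl_norm y;
  bl_complete : forall u : nat -> carrier,
    (forall eps, 0 < eps -> exists N, forall m n, (N <= m)%nat -> (N <= n)%nat ->
        bl_norm (bl_add (u m) (bl_opp (u n))) < eps) ->
    exists l, forall eps, 0 < eps -> exists N, forall n, (N <= n)%nat ->
        bl_norm (bl_add (u n) (bl_opp l)) < eps
}.

Arguments bl_zero {_}.
Arguments bl_add {_}.
Arguments bl_opp {_}.
Arguments bl_scal {_}.
Arguments bl_le {_}.
Arguments bl_join {_}.
Arguments bl_meet {_}.
Arguments bl_norm {_}.

Definition blabs {X : BanachLattice} (x : X) : X := bl_join x (bl_opp x).

Definition abs_set {X : BanachLattice} (C : X -> Prop) : X -> Prop :=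
  fun y => exists x, C x /\ y = blabs x.

Definition so {X : BanachLattice} (S : X -> Prop) : X -> Prop :=
  fun z => exists x, S x /\ bl_le (blabs z) (blabs x).

Definition closure {X : BanachLattice} (S : X -> Prop) : X -> Prop :=
  fun z => forall eps, 0 < eps -> exists s, S s /\ bl_norm (bl_add z (bl_opp s)) < eps.

Definition norm_closed {X : BanachLattice} (S : X -> Prop) : Prop :=
  forall z, closure S z -> S z.

(* Main.v *)
Require Import Defs.
From Stdlib Require Import Reals Lra.

Section Alg.
Context {X : BanachLattice}.
Local Notation "a + b" := (@bl_add X a b).
Local Notation "- a" := (@bl_opp X a).
Local Notation "0" := (@bl_zero X).
Local Notation "a <= b" := (@bl_le X a b).

Lemma addNl (x : X) : -x + x = 0.
Proof. rewrite bl_addC. apply bl_addN. Qed.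
Lemma add0l (x : X) : 0 + x = x.
Proof. rewrite bl_addC. apply bl_add0. Qed.
Lemma addK (x z : X) : (x + z) + -z = x.
Proof. rewrite <- bl_addA, bl_addN, bl_add0. reflexivity. Qed.
Lemma addNK (x z : X) : (x + -z) + z = x.
Proof. rewrite <- bl_addA, addNl, bl_add0. reflexivity. Qed.
Lemma le_cancel (x y z : X) : x + z <= y + z -> x <= y.
Proof. intro H. pose proof (bl_le_add _ _ _ (-z) H). rewrite !addK in H0. exact H0. Qed.
Lemma opp_unique (u v : X) : u + v = 0 -> v = -u.
Proof.
  intro H. rewrite <- (add0l v), <- (addNl u), <- bl_addA, H, bl_add0. reflexivity.
Qed.
Lemma opp_opp (x : X) : - - x = x.
Proof. symmetry. apply opp_unique. apply addNl. Qed.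
Lemma opp_add (u v : X) : -(u + v) = -u + -v.
Proof.
  symmetry. apply opp_unique.
  rewrite (bl_addC _ (-u) (-v)), bl_addA, addK, bl_addN. reflexivity.
Qed.
Lemma opp_le (x y : X) : x <= y -> -y <= -x.
Proof.
  intro H. apply (le_cancel _ _ (x + y)).
  rewrite (bl_addC _ x y) at 1. rewrite bl_addA, addNl, add0l.
  rewrite bl_addA, addNl, add0l. exact H.
Qed.
Lemma sub_le (u v t : X) : u + -v <= t -> u <= t + v.
Proof. intro H. pose proof (bl_le_add _ _ _ v H). rewrite addNK in H0. exact H0. Qed.
Lemma le_sub (u v t : X) : u <= t + v -> u + -v <= t.
Proof. intro H. pose proof (bl_le_add _ _ _ (-v) H). rewrite addK in H0. exact H0. Qed.
Lemma add_cancel (x y z : X) : x + z = y + z -> x = y.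
Proof. intro H. rewrite <- (addK x z), H, addK. reflexivity. Qed.
Lemma scal0 (a : R) : bl_scal a (0) = 0.
Proof.
  apply (add_cancel _ _ (bl_scal a 0)).
  rewrite <- bl_scalDr, bl_add0, add0l. reflexivity.
Qed.
Lemma abs_ge0 (v : X) : 0 <= blabs v.
Proof.
  assert (H : 0 <= blabs v + blabs v).
  { rewrite <- (bl_addN _ v).
    apply bl_le_trans with (blabs v + -v).
    apply bl_le_add, bl_join_ub_l.
    rewrite (bl_addC _ (blabs v) (-v)).
    apply bl_le_add, bl_join_ub_r. }
  rewrite <- (bl_scal1 _ (blabs v)) in H at 1 2.
  rewrite <- bl_scalDl in H.
  apply (bl_le_scal _ (/2)) in H; [|lra].
  rewrite scal0, bl_scalA in H.
  replace (/2 * (1+1))%R with 1%R in H by field.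
  rewrite bl_scal1 in H. exact H.
Qed.
Lemma le_addpos (z t : X) : 0 <= t -> z <= t + z.
Proof. intro H. rewrite <- (add0l z) at 1. apply bl_le_add. exact H. Qed.
Lemma opp0 : - (0) = 0.
Proof. symmetry. apply opp_unique. apply bl_add0. Qed.

Lemma trunc (z y s : X) : blabs z <= blabs y -> 0 <= s ->
  blabs (bl_meet (bl_join z (-s)) s) <= s /\
  blabs (z + - bl_meet (bl_join z (-s)) s) <= blabs (y + -s).
Proof.
  intros Hzy Hs.
  set (w := bl_meet (bl_join z (-s)) s).
  set (t := blabs (y + -s)).
  assert (Ht : 0 <= t) by apply abs_ge0.
  assert (Hss : -s <= s).
  { apply bl_le_trans with (0). rewrite <- opp0. apply opp_le. exact Hs. exact Hs. }
  assert (Hsw : -s <= w).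
  { apply bl_meet_glb. apply bl_join_ub_r. exact Hss. }
  assert (HA : blabs y <= t + s).
  { apply bl_join_lub.
    - apply sub_le. apply bl_join_ub_l.
    - apply sub_le. apply bl_le_trans with (-(y + -s)).
      + rewrite opp_add, opp_opp. rewrite (bl_addC _ (-y) (-s)), (bl_addC _ (-y) s).
        apply bl_le_add. exact Hss.
      + apply bl_join_ub_r. }
  assert (Hz1 : z <= t + s).
  { apply bl_le_trans with (blabs z). apply bl_join_ub_l. apply bl_le_trans with (blabs y); assumption. }
  assert (Hz2 : -z <= t + s).
  { apply bl_le_trans with (blabs z). apply bl_join_ub_r. apply bl_le_trans with (blabs y); assumption. }
  split.
  - apply bl_join_lub.
    + apply bl_meet_lb_r.
    + rewrite <- (opp_opp s). apply opp_le. exact Hsw.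
  - apply bl_join_lub.
    + assert (H1 : z + -t <= w).
      { apply bl_meet_glb.
        - apply bl_le_trans with z.
          + apply le_sub. rewrite bl_addC. apply le_addpos. exact Ht.
          + apply bl_join_ub_l.
        - apply le_sub. rewrite bl_addC. exact Hz1. }
      apply le_sub. apply bl_le_trans with ((z + -t) + t).
      rewrite addNK. apply bl_le_refl. rewrite (bl_addC _ t w).
      apply bl_le_add. exact H1.
    + rewrite opp_add, opp_opp, bl_addC. apply le_sub.
      apply bl_le_trans with (bl_join z (-s)). apply bl_meet_lb_l.
      apply bl_join_lub.
      * apply le_addpos. exact Ht.
      * apply le_sub in Hz2. rewrite bl_addC in Hz2. apply sub_le in Hz2.
        exact Hz2.
Qed.
End Alg.

Theorem mainTheorem11 (X : BanachLattice) (C : X -> Prop) :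
  norm_closed (so (closure (abs_set C))) ->
  forall z : X, closure (so C) z <-> so (closure (abs_set C)) z.
Proof.
  intros Hcl z. split.
  - intro Hz. apply Hcl. intros eps Heps.
    destruct (Hz eps Heps) as [s [[x [Cx Hsx]] Hn]].
    exists s. split; [|exact Hn].
    exists (blabs x). split.
    + intros e He. exists (blabs x). split. exists x. split; auto.
      rewrite bl_addN. rewrite <- (scal0 0%R), bl_norm_scal, Rabs_R0, Rmult_0_l. exact He.
    + apply bl_le_trans with (blabs x). exact Hsx. apply bl_join_ub_l.
  - intros [y [Hy Hzy]] eps Heps.
    destruct (Hy eps Heps) as [s [[x [Cx ->]] Hn]].
    destruct (trunc z y (blabs x) Hzy (abs_ge0 x)) as [H1 H2].
    eexists. split.
    + exists x. split. exact Cx. exact H1.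
    + eapply Rle_lt_trans; [|exact Hn]. apply bl_norm_lattice.
      exact H2.
Qed.
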